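(* Let $k\ge2$ be an integer and let $\{F_n(k)\}$ be the $k$-bonacci sequence: $F_0(k)=\dots=F_{k-2}(k)=0$, $F_{k-1}(k)=1$, and $F_{n+k}(k)=\sum_{l=0}^{k-1}F_{n+l}(k)$ for $n\ge0$. Then \[ \{F_n(k)\}=\sum_{l=0}^{\infty}(\tilde{\mathcal{I}}_k)^l\, I_0^{\,k-1+l}\{1\}, \] the sum being taken termwise (for each index only finitely many summands are nonzero).
   Context: Sequences are indexed by $n=0,1,2,\dots$; sums are termwise and $\{1\}=1,1,1,\dots$. The insertion operator is $I_0\{a_n\}=0,a_0,a_1,\dots$, $I_0^j$ its $j$-fold application ($I_0^0$ the identity). The left integral is $\mathcal{I}_L^0\{a_n\}=\{\sum_{j=0}^{n-1}a_j\}$ (empty sum $=0$). The deformed integral is the operator $\tilde{\mathcal{I}}_k=\sum_{l=0}^{k-2}I_0^l\,\mathcal{I}_L^0$, and $(\tilde{\mathcal{I}}_k)^l$ its $l$-fold application. *)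

(* Defs.v *)
From mathcomp Require Import all_boot.
Set Implicit Arguments. Unset Strict Implicit. Unset Printing Implicit Defensive.

Definition seqN := nat -> nat.

Definition one_seq : seqN := fun _ => 1.

Definition I0 (a : seqN) : seqN := fun n => if n is n'.+1 then a n' else 0.

Definition I0pow (j : nat) (a : seqN) : seqN := iter j I0 a.

Definition IL (a : seqN) : seqN := fun n => \sum_(j < n) a j.

Definition tildeI (k : nat) (a : seqN) : seqN :=
  fun n => \sum_(l < k.-1) I0pow l (IL a) n.

Definition tildeIpow (k l : nat) (a : seqN) : seqN := iter l (tildeI k) a.

Definition kterm (k l : nat) : seqN := tildeIpow k l (I0pow (k - 1 + l) one_seq).

Definition is_kbonacci (k : nat) (F : seqN) : Prop :=
  (forall n, n < k - 1 -> F n = 0) /\ F (k - 1) = 1 /\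
  (forall n, F (n + k) = \sum_(l < k) F (n + l)).

(* Main.v *)
Require Import Defs.
From mathcomp Require Import all_boot.
From Stdlib Require FunctionalExtensionality.
Notation functional_extensionality := FunctionalExtensionality.functional_extensionality.
From mathcomp Require Import zify.

Definition addf (a b : seqN) : seqN := fun n => a n + b n.
Definition zf : seqN := fun _ => 0.
Definition agree m (a b : seqN) := forall j, j < m -> a j = b j.

Lemma I0pow_val l c n : I0pow l c n = if l <= n then c (n - l) else 0.
Proof.
elim: l n => [|l IH] n; first by rewrite subn0.
rewrite /I0pow /= -/(I0pow l c). case: n => [|n] //=; rewrite ?IH.
Qed.

Lemma IL_I0 a : IL (I0 a) = I0 (IL a).
Proof.
apply: functional_extensionality => n; case: n => [|n]; rewrite /IL /= ?big_ord0 //.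
by rewrite big_ord_recl /= add0n.
Qed.

Lemma I0pow_I0 l a : I0pow l (I0 a) = I0 (I0pow l a).
Proof. by elim: l => //= l IH; rewrite /I0pow /= -/(I0pow l _) IH. Qed.

Lemma tildeI_I0 k a : tildeI k (I0 a) = I0 (tildeI k a).
Proof.
apply: functional_extensionality => n.
rewrite /tildeI IL_I0. under eq_bigr do rewrite I0pow_I0.
case: n => [|n] /=; last by [].
by rewrite big1.
Qed.

Lemma tildeIpow_I0 k l a : tildeIpow k l (I0 a) = I0 (tildeIpow k l a).
Proof. rewrite /tildeIpow; elim: l => //= l ->; by rewrite tildeI_I0. Qed.

Lemma kterm_S k l : kterm k l.+1 = tildeI k (I0 (kterm k l)).
Proof. by rewrite /kterm addnS /= -tildeIpow_I0. Qed.

Lemma I0_add a b : I0 (addf a b) = addf (I0 a) (I0 b).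
Proof. by apply: functional_extensionality => -[|n]. Qed.

Lemma I0pow_add l a b : I0pow l (addf a b) = addf (I0pow l a) (I0pow l b).
Proof. by elim: l => //= l IH; rewrite /I0pow /= -!/(I0pow l _) IH I0_add. Qed.

Lemma IL_add a b : IL (addf a b) = addf (IL a) (IL b).
Proof. apply: functional_extensionality => n. by rewrite /IL /addf big_split. Qed.

Lemma tildeI_add k a b : tildeI k (addf a b) = addf (tildeI k a) (tildeI k b).
Proof.
apply: functional_extensionality => n. rewrite /tildeI IL_add.
under eq_bigr do rewrite I0pow_add. by rewrite /addf big_split.
Qed.

Lemma tildeI_zero k : tildeI k zf = zf.
Proof.
apply: functional_extensionality => n. rewrite /tildeI.
have -> : IL zf = zf by apply: functional_extensionality => m; rewrite /IL big1.
apply: big1 => l _. rewrite I0pow_val; by case: ifP.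
Qed.

Lemma tildeI_sum k m (f : nat -> seqN) :
  tildeI k (fun n => \sum_(i<m) f i n) = fun n => \sum_(i<m) tildeI k (f i) n.
Proof.
elim: m => [|m IH].
  have -> : (fun n => \sum_(i<0) f i n) = zf by apply: functional_extensionality => n; rewrite big_ord0.
  rewrite tildeI_zero; apply: functional_extensionality => n; by rewrite big_ord0.
have -> : (fun n => \sum_(i<m.+1) f i n) = addf (fun n => \sum_(i<m) f i n) (f m).
  by apply: functional_extensionality => n; rewrite big_ord_recr.
rewrite tildeI_add IH; apply: functional_extensionality => n; by rewrite big_ord_recr.
Qed.

Lemma I0_sum m (f : nat -> seqN) :
  I0 (fun n => \sum_(i<m) f i n) = fun n => \sum_(i<m) I0 (f i) n.
Proof. apply: functional_extensionality => -[|n] //=. by rewrite big1. Qed.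

Definition H k m : seqN := fun n => \sum_(l<m) kterm k l n.

Lemma H_S k m n : H k m.+1 n = I0pow (k-1) one_seq n + tildeI k (I0 (H k m)) n.
Proof.
rewrite /H big_ord_recl I0_sum (tildeI_sum k m (fun i => I0 (kterm k i))).
have -> : kterm k 0 n = I0pow (k-1) one_seq n by rewrite /kterm addn0.
congr (_ + _). apply: eq_bigr => i _. by rewrite lift0 kterm_S.
Qed.

Lemma agree_I0 m a b : agree m a b -> agree m.+1 (I0 a) (I0 b).
Proof. move=> h [|j] //= hj; exact: h. Qed.

Lemma agree_W m a b : agree m.+1 a b -> agree m a b.
Proof. move=> h j hj; apply: h; lia. Qed.

Lemma agree_IL m a b : agree m a b -> agree m (IL a) (IL b).
Proof. move=> h j hj; rewrite /IL; apply: eq_bigr => i _; apply: h; have := ltn_ord i; lia. Qed.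

Lemma agree_I0pow l m a b : agree m a b -> agree m (I0pow l a) (I0pow l b).
Proof.
elim: l => // l IH h. rewrite /I0pow /= -!/(I0pow l _).
apply: agree_W; apply: agree_I0; exact: IH.
Qed.

Lemma agree_tildeI k m a b : agree m a b -> agree m (tildeI k a) (tildeI k b).
Proof.
move=> h j hj; rewrite /tildeI; apply: eq_bigr => l _.
exact: (agree_I0pow _ _ _ _ (agree_IL _ _ _ h) _ hj).
Qed.

Lemma tildeIpow_van k l m a : agree m a zf -> agree m (tildeIpow k l a) zf.
Proof.
move=> h; elim: l => // l IH. rewrite /tildeIpow /= -/(tildeIpow k l _) -(tildeI_zero k).
exact: agree_tildeI.
Qed.

Lemma kterm_van k l : agree (k - 1 + l) (kterm k l) zf.
Proof.
apply: tildeIpow_van => j hj; rewrite I0pow_val; case: ifP => //; lia.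
Qed.

Section Fib.
Variable k' : nat.
Variable F : seqN.
Hypothesis hF : is_kbonacci k'.+2 F.
Let P := IL F.

Lemma P0 x : x <= k'.+1 -> P x = 0.
Proof.
move=> hx; rewrite /P /IL; apply: big1 => i _. case: hF => h0 _. apply: h0.
have := ltn_ord i. rewrite /=. lia.
Qed.

Lemma I0P0 x : x <= k'.+1 -> I0 P x = 0.
Proof. case: x => //= x hx; apply: P0; lia. Qed.

Definition S n := \sum_(l<k'.+1) I0 P (n - l).

Lemma S_k : S k'.+1 = 0.
Proof. apply: big1 => l _; apply: I0P0; lia. Qed.

Lemma S_step n : k'.+1 <= n -> S n.+1 = S n + \sum_(l<k'.+1) F (n - l - 1).
Proof.
move=> hn; rewrite /S -big_split; apply: eq_bigr => l _.
have hl := ltn_ord l.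
have [x [e1 e2 e3]] : exists x, [/\ n.+1 - l = x.+2, n - l = x.+1 & n - l - 1 = x].
  exists (n - l - 1); split; lia.
rewrite e3 e1 e2 /= /P /IL big_ord_recr //.
Qed.

Lemma F_step n : k'.+1 <= n -> F n.+1 = F n + \sum_(l<k'.+1) F (n - l - 1).
Proof.
move=> hn; case: hF => _ [_ hr].
have := hr (n - k'.+1). have -> : n - k'.+1 + k'.+2 = n.+1 by lia.
move=> ->. rewrite big_ord_recr /= addnC. congr (_ + _); first by congr F; lia.
rewrite (reindex_inj rev_ord_inj) /=. apply: eq_bigr => l _; congr F.
have := ltn_ord l; lia.
Qed.

Lemma F_S d : F (k'.+1 + d) = 1 + S (k'.+1 + d).
Proof.
elim: d => [|d IH]; first by rewrite addn0 S_k; case: hF => _ [-> _].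
rewrite addnS (F_step (k'.+1 + d)) ?(S_step (k'.+1 + d)) ?leq_addr // IH addnA.
by [].
Qed.

Lemma F_fix n : F n = I0pow (k'.+2 - 1) one_seq n + tildeI k'.+2 (I0 F) n.
Proof.
rewrite I0pow_val /tildeI IL_I0 -/P.
have -> : k'.+2 - 1 = k'.+1 by lia.
case: ifP => hn.
  have -> : \sum_(l < k'.+2.-1) I0pow l (I0 P) n = S n.
    apply: eq_bigr => l _; rewrite I0pow_val; case: ifP => //; have := ltn_ord l; lia.
  have -> : n = k'.+1 + (n - k'.+1) by lia.
  exact: F_S.
rewrite add0n big1.
  case: hF => h0 _; apply: h0; lia.
move=> l _; rewrite I0pow_val; case: ifP => // _; apply: I0P0; lia.
Qed.
End Fib.

Theorem mainTheorem17 (k : nat) (hk : 2 <= k) (F : nat -> nat) :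
  is_kbonacci k F ->
  forall n : nat, exists N : nat,
    (forall l, N <= l -> kterm k l n = 0) /\
    F n = \sum_(l < N) kterm k l n.
Proof.
move=> hF n; exists n.+1; split.
  move=> l hl; apply: kterm_van; lia.
case: k hk hF => [|[|k']] // _ hF.
have main : forall m, agree m F (H k'.+2 m).
  elim=> [|m IH] // j hj.
  rewrite (F_fix _ _ hF) H_S; congr (_ + _).
  apply: (agree_tildeI _ _ _ _ _ _ hj); exact: agree_I0.
exact: main.
Qed.
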